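(* Every strong Euler–Gauss sequence is a Gauss sequence.
   Context: $\mu$ is the Möbius function. For an integer sequence $(a_n)$ and $n\ge1$, $A_n^+=\prod_{d\mid n,\ \mu(d)=1} a_{n/d}$ and $A_n^-=\prod_{d\mid n,\ \mu(d)=-1} a_{n/d}$ (empty products equal $1$). An integer sequence is a strong Euler–Gauss sequence if for all $n\ge1$, $\left(\frac{A_n^-}{\gcd(A_n^+,A_n^-)}\right)^{-1}\equiv\left(\frac{A_n^+}{\gcd(A_n^+,A_n^-)}\right)^{-1}\pmod n$, where $x^{-1}$ denotes the inverse of $x$ modulo $n$ (so the two quotients are required to be invertible modulo $n$). A Gauss sequence is an integer sequence with $\sum_{d\mid n}\mu(d)a_{n/d}\equiv0\pmod n$ for all $n\ge1$. *)

(* Defs.v *)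
From mathcomp Require Import all_boot all_order all_algebra.
Set Implicit Arguments. Unset Strict Implicit. Unset Printing Implicit Defensive.
Import Order.TTheory GRing.Theory Num.Theory.
Local Open Scope ring_scope.

Definition squarefree (n : nat) : bool :=
  (0 < n)%N && all (fun p => logn p n == 1)%N (primes n).

(* Moebius function mu : nat -> int (mu 0 = 0 by convention; never used). *)
Definition mobius (n : nat) : int :=
  if squarefree n then (-1) ^+ size (primes n) else 0.

Definition Aplus (a : nat -> int) (n : nat) : int :=
  \prod_(d <- divisors n | mobius d == 1) a (n %/ d)%N.
Definition Aminus (a : nat -> int) (n : nat) : int :=
  \prod_(d <- divisors n | mobius d == -1) a (n %/ d)%N.

Definition inv_congr (n : nat) (x y : int) : Prop :=
  exists u v : int,
    (x * u == 1 %[mod n%:Z])%Z /\ (y * v == 1 %[mod n%:Z])%Z /\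
    (u == v %[mod n%:Z])%Z.

Definition strong_euler_gauss (a : nat -> int) : Prop :=
  forall n : nat, (0 < n)%N ->
    let g := gcdz (Aplus a n) (Aminus a n) in
    inv_congr n ((Aminus a n) %/ g)%Z ((Aplus a n) %/ g)%Z.

Definition gauss_seq (a : nat -> int) : Prop :=
  forall n : nat, (0 < n)%N ->
    (\sum_(d <- divisors n) mobius d * a (n %/ d)%N == 0 %[mod n%:Z])%Z.

(* Main.v *)
Require Import Defs.
From mathcomp Require Import all_boot all_order all_algebra.
From mathcomp Require Import ring.
Set Implicit Arguments. Unset Strict Implicit. Unset Printing Implicit Defensive.
Import Order.TTheory GRing.Theory Num.Theory.
Local Open Scope ring_scope.

Lemma mobius1 : mobius 1 = 1.
Proof. by []. Qed.

Lemma mobius_pM p e : prime p -> (0 < e)%N -> ~~ (p %| e)%N ->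
  mobius (p * e) = - mobius e.
Proof.
move=> pp e0 npe.
have p0 := prime_gt0 pp.
have pnot : p \notin primes e by rewrite mem_primes pp e0.
have pe : perm_eq (primes (p * e)) (p :: primes e).
  apply: uniq_perm; rewrite ?primes_uniq //= ?pnot ?primes_uniq //.
  move=> x; rewrite primesM // in_cons; congr (_ || _).
  rewrite mem_primes p0 /=; apply/andP/eqP => [[px]|->]; last by rewrite dvdnn.
  by rewrite dvdn_prime2 // => /eqP.
have sq : squarefree (p * e) = squarefree e.
  rewrite /squarefree muln_gt0 p0 e0 /= (perm_all _ pe) /=.
  rewrite lognM // logn_prime // eqxx.
  have -> : logn p e = 0%N by apply/eqP; rewrite -leqn0 leqNgt logn_gt0.
  rewrite /=; apply: eq_in_all => q qe.
  rewrite lognM // logn_prime //.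
  have -> : (q == p) = false by apply/eqP => qp; move: pnot; rewrite -qp qe.
  by [].
rewrite /mobius sq (perm_size pe) /=; case: (squarefree e) => //.
by rewrite exprS mulN1r.
Qed.
Lemma ndvd_of_coprime p m : prime p -> coprime m p -> ~~ (p %| m)%N.
Proof. by move=> pp; rewrite coprime_sym prime_coprime. Qed.

Lemma mobius0_sqf d : mobius d != 0 -> squarefree d.
Proof. by rewrite /mobius; case: (squarefree d). Qed.

Lemma divisors_perm p k m (P : pred int) : prime p -> (0 < k)%N -> (0 < m)%N ->
  coprime m p -> ~~ P 0 ->
  perm_eq [seq d <- divisors (m * p ^ k) | P (mobius d)]
          ([seq e <- divisors m | P (mobius e)] ++
           [seq (p * e)%N | e <- divisors m & P (- mobius e)]).
Proof.
move=> pp k0 m0 cmp nP0.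
have p0 := prime_gt0 pp.
have n0 : (0 < m * p ^ k)%N by rewrite muln_gt0 m0 expn_gt0 p0.
have npm := ndvd_of_coprime pp cmp.
have ndiv e : (e %| m)%N -> ~~ (p %| e)%N.
  by move=> em; apply: contra npm => pe; apply: dvdn_trans em.
apply: uniq_perm.
- by rewrite filter_uniq ?divisors_uniq.
- rewrite cat_uniq filter_uniq ?divisors_uniq //=; apply/andP; split.
    apply/hasPn => x /mapP [e]; rewrite mem_filter => /andP[_ ed] ->.
    rewrite mem_filter -dvdn_divisors //; apply/negP => /andP[_ pem].
    by move: npm; rewrite (dvdn_trans _ pem) // dvdn_mulr.
  rewrite map_inj_in_uniq ?filter_uniq ?divisors_uniq //.
  by move=> x y _ _ /eqP; rewrite eqn_pmul2l // => /eqP.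
move=> x; rewrite mem_filter mem_cat !mem_filter -!dvdn_divisors //.
apply/andP/orP => [[Px xn]|].
  have sqx : squarefree x.
    by apply: mobius0_sqf; apply: contraNneq nP0 => <-.
  have x0 : (0 < x)%N by case/andP: sqx.
  case: (boolP (p %| x)%N) => px; last first.
    left; rewrite Px /=; rewrite Gauss_dvdl // in xn.
    by rewrite coprimeXr // coprime_sym prime_coprime.
  right; apply/mapP; exists (x %/ p)%N; last by rewrite mulnC divnK.
  have xe : x = (p * (x %/ p))%N by rewrite mulnC divnK.
  have e0 : (0 < x %/ p)%N by rewrite divn_gt0 // dvdn_leq.
  have npe : ~~ (p %| x %/ p)%N.
    have : logn p x = 1%N.
      apply/eqP; move: sqx => /andP[_ /allP]; apply; by rewrite mem_primes pp x0.
    rewrite {1}xe lognM // logn_prime // eqxx add1n => -[].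
    by move=> h; apply/negP => pe; move: h; rewrite -[logn _ _]prednK ?logn_gt0 ?mem_primes ?pp ?e0.
  rewrite mem_filter; apply/andP; split.
    by rewrite -(mobius_pM pp e0 npe) -xe.
  rewrite -dvdn_divisors //.
  move: xn; rewrite {1}xe -(prednK k0) expnS mulnCA dvdn_pmul2l // Gauss_dvdl //.
  by rewrite coprimeXr // coprime_sym prime_coprime.
case=> [/andP[Px xm]|/mapP[e]].
  by rewrite Px dvdn_mulr.
rewrite mem_filter => /andP[Pe]; rewrite -dvdn_divisors // => em ->.
have e0 : (0 < e)%N by apply: dvdn_gt0 em.
rewrite mobius_pM // ?ndiv //; split => //.
by rewrite mulnC dvdn_mul // dvdn_exp.
Qed.
Definition prel (p k : nat) (x y : int) :=
  exists c d : int, coprimez d p%:Z /\ x * d = y * (d + (p ^ k)%:Z * c).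

Section Rel.
Variables (p k : nat).
Hypotheses (pp : prime p) (k0 : (0 < k)%N).

Lemma coprimez_p x : coprimez x p%:Z = ~~ (p%:Z %| x)%Z.
Proof. by rewrite coprimezE /= coprime_sym prime_coprime. Qed.

Lemma p_dvd_pk : (p%:Z %| (p ^ k)%:Z)%Z.
Proof. by rewrite dvdzE /= dvdn_exp. Qed.

Lemma coprimez_shift d c : coprimez d p%:Z -> coprimez (d + (p ^ k)%:Z * c) p%:Z.
Proof.
rewrite !coprimez_p; apply: contra => h.
have -> : d = (d + (p ^ k)%:Z * c) - (p ^ k)%:Z * c by ring.
by rewrite rpredB // dvdz_mulr // p_dvd_pk.
Qed.

Lemma prel_one : prel p k 1 1.
Proof. exists 0, 1; split. rewrite /coprimez /=. exact: coprime1n. by rewrite mulr0 addr0. Qed.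

Lemma prel_sym x y : prel p k x y -> prel p k y x.
Proof.
move=> [c [d [cd e]]]; exists (- c), (d + (p ^ k)%:Z * c); split.
  exact: coprimez_shift.
by rewrite -e; ring.
Qed.

Lemma prel_mul x y x' y' : prel p k x y -> prel p k x' y' -> prel p k (x * x') (y * y').
Proof.
move=> [c [d [cd e]]] [c' [d' [cd' e']]].
exists (c * d' + c' * d + (p ^ k)%:Z * c * c'), (d * d'); split.
  by rewrite coprimezMl cd cd'.
have -> : x * x' * (d * d') = (x * d) * (x' * d') by ring.
by rewrite e e'; ring.
Qed.

Lemma prel_cancel x y B1 B2 : B2 != 0 -> prel p k (x * B1) (y * B2) ->
  prel p k B1 B2 -> prel p k x y.
Proof.
move=> B20 [c' [d' [cd' e2]]] [c [d [cd e1]]].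
exists (d * c' - c * d'), ((d + (p ^ k)%:Z * c) * d'); split.
  by rewrite coprimezMl coprimez_shift.
apply: (mulfI B20).
have -> : B2 * (x * ((d + (p ^ k)%:Z * c) * d')) = x * d' * (B2 * (d + (p ^ k)%:Z * c)) by ring.
rewrite -e1.
have -> : x * d' * (B1 * d) = d * (x * B1 * d') by ring.
rewrite e2; ring.
Qed.

Lemma prel_dvd x y : prel p k x y -> ((p ^ k)%:Z %| x - y)%Z.
Proof.
move=> [c [d [cd e]]].
rewrite -(@Gauss_dvdzl _ _ d).
  have -> : (x - y) * d = (p ^ k)%:Z * (y * c) by rewrite mulrBl e; ring.
  by rewrite dvdz_mulr.
by rewrite coprimezE /=; apply: coprimeXl; move: cd; rewrite coprimezE /= coprime_sym.
Qed.

End Rel.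
Lemma seg_prel a n p k : strong_euler_gauss a -> (0 < n)%N -> prime p -> (0 < k)%N ->
  (p ^ k %| n)%N -> prel p k (Aplus a n) (Aminus a n).
Proof.
move=> H n0 pp k0 pkn.
have := H n n0; rewrite /inv_congr.
set g := gcdz _ _; set x := (Aminus a n %/ g)%Z; set y := (Aplus a n %/ g)%Z.
move=> [u [v [hx [hy huv]]]].
have eP : Aplus a n = y * g by rewrite divzK // dvdz_gcdl.
have eM : Aminus a n = x * g by rewrite divzK // dvdz_gcdr.
rewrite eqz_mod_dvd in hx; rewrite eqz_mod_dvd in hy; rewrite eqz_mod_dvd in huv.
have nxy : (n%:Z %| x - y)%Z.
  have -> : x - y = y * (x * u - 1) - x * (y * v - 1) - x * y * (u - v) by ring.
  by apply: rpredB; [apply: rpredB|]; apply: dvdz_mull.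
have pkn' : ((p ^ k)%:Z %| n%:Z)%Z by rewrite dvdzE.
have /dvdzP [c hc] : ((p ^ k)%:Z %| y - x)%Z.
  by apply: dvdz_trans pkn' _; rewrite -opprB rpredN.
exists c, x; split.
  rewrite coprimez_p //; apply/negP => px.
  have : (p%:Z %| x * u - (x * u - 1))%Z.
    rewrite rpredB // ?dvdz_mulr //.
    apply: dvdz_trans hx; apply: dvdz_trans pkn'; exact: p_dvd_pk.
  have -> : x * u - (x * u - 1) = 1 by ring.
  by rewrite dvdz1 /=; move/eqP => p1; move: pp; rewrite p1.
have -> : x + (p ^ k)%:Z * c = y by rewrite mulrC -hc; ring.
by rewrite eP eM; ring.
Qed.
Lemma seg_nonzero a m : strong_euler_gauss a -> (0 < m)%N -> a m != 0.
Proof.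
move=> H m0; apply/negP => /eqP am.
have n0 : (0 < 2 * m)%N by rewrite muln_gt0 m0.
have := H _ n0; rewrite /inv_congr.
have -> : Aminus a (2 * m) = 0.
  apply/eqP; rewrite prodf_seq_eq0; apply/hasP; exists 2%N.
    by rewrite -dvdn_divisors // dvdn_mulr.
  by rewrite mulKn // am eqxx andbT.
move=> [u [v [hx _]]].
move: hx; rewrite div0z mul0r eqz_mod_dvd sub0r rpredN dvdz1 /=.
by case: m m0 {am n0 H} => [|m'] // _; rewrite mulnS. Qed.
Lemma prod_split1 (r : seq nat) (P : pred nat) (F : nat -> int) :
  (1 \in r)%N -> uniq r ->
  \prod_(i <- r | P i) F i = (if P 1%N then F 1%N else 1) * \prod_(i <- r | P i && (i != 1%N)) F i.
Proof.
move=> r1 ur; rewrite big_mkcond (bigD1_seq 1%N) //=; congr (_ * _).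
rewrite [RHS]big_mkcond [LHS]big_mkcond; apply: eq_bigr => i _.
by case: (P i); case: (i != 1%N).
Qed.

Lemma prel_prod p k (r : seq nat) (P Q : pred nat) (F G : nat -> int) :
  prime p -> (0 < k)%N -> (forall i, i \in r -> P i = Q i) ->
  (forall i, i \in r -> P i -> prel p k (F i) (G i)) ->
  prel p k (\prod_(i <- r | P i) F i) (\prod_(i <- r | Q i) G i).
Proof.
move=> pp k0 PQ FG.
rewrite big_seq_cond [X in prel _ _ _ X]big_seq_cond.
rewrite [X in prel _ _ _ X](eq_bigl (fun i => (i \in r) && P i)); last first.
  by move=> i /=; case: (boolP (i \in r)) => // /PQ ->.
apply: (@big_ind2 _ _ (prel p k)).
- exact: prel_one.
- by move=> *; apply: prel_mul.
by move=> i /andP[]; apply: FG.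
Qed.

Lemma pos_div n d : (0 < n)%N -> (d %| n)%N -> (0 < n %/ d)%N.
Proof.
move=> n0 dn; have d0 : (0 < d)%N by apply: dvdn_gt0 dn.
by rewrite divn_gt0 // dvdn_leq.
Qed.

Lemma main_step a p k : strong_euler_gauss a -> prime p -> (0 < k)%N ->
  forall m, (0 < m)%N -> coprime m p -> prel p k (a (m * p ^ k)%N) (a (m * p ^ k.-1)%N).
Proof.
move=> H pp k0 m; elim/ltn_ind: m => m IH m0 cmp.
have p0 := prime_gt0 pp.
set n := (m * p ^ k)%N.
have n0 : (0 < n)%N by rewrite muln_gt0 m0 expn_gt0 p0.
have h := seg_prel H n0 pp k0 (dvdn_mull _ (dvdnn _)).
have d1 := divisor1 m; have ud := divisors_uniq m.
have nz : forall d, (d %| n)%N -> a (n %/ d)%N != 0.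
  by move=> d dn; apply: (seg_nonzero H); apply: pos_div.
have dn1 : forall e, e \in divisors m -> (e %| n)%N.
  by move=> e; rewrite -dvdn_divisors // => em; apply: dvdn_mulr.
have dn2 : forall e, e \in divisors m -> (p * e %| n)%N.
  move=> e; rewrite -dvdn_divisors // => em.
  by rewrite mulnC dvdn_mul // dvdn_exp.
have eA : Aplus a n = \prod_(e <- divisors m | mobius e == 1) a (n %/ e)%N *
    \prod_(e <- divisors m | - mobius e == 1) a (n %/ (p * e))%N.
  have pe := @divisors_perm p k m (fun z : int => z == 1) pp k0 m0 cmp isT.
  rewrite /= in pe.
  rewrite /Aplus -big_filter (perm_big _ pe) big_cat big_map /= !big_filter.
  done.
have eM : Aminus a n = \prod_(e <- divisors m | mobius e == -1) a (n %/ e)%N *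
    \prod_(e <- divisors m | - mobius e == -1) a (n %/ (p * e))%N.
  have pe := @divisors_perm p k m (fun z : int => z == -1) pp k0 m0 cmp isT.
  rewrite /= in pe.
  by rewrite /Aminus -big_filter (perm_big _ pe) big_cat big_map /= !big_filter.
set Xp := \prod_(e <- divisors m | (mobius e == 1) && (e != 1%N)) a (n %/ e)%N.
set Yp := \prod_(e <- divisors m | (- mobius e == 1) && (e != 1%N)) a (n %/ (p * e))%N.
set Xm := \prod_(e <- divisors m | (mobius e == -1) && (e != 1%N)) a (n %/ e)%N.
set Ym := \prod_(e <- divisors m | (- mobius e == -1) && (e != 1%N)) a (n %/ (p * e))%N.
have m1 : (-1 == 1 :> int) = false by [].
have eA' : Aplus a n = a n * (Xp * Yp).
  rewrite eA [X in X * _](prod_split1 _ _ d1 ud) [X in _ * X](prod_split1 _ _ d1 ud).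
  by rewrite mobius1 eqxx m1 divn1 mul1r mulrA.
have eM' : Aminus a n = a (m * p ^ k.-1)%N * (Ym * Xm).
  rewrite eM [X in X * _](prod_split1 _ _ d1 ud) [X in _ * X](prod_split1 _ _ d1 ud) mobius1 eqxx eq_sym m1 mul1r.
  have -> : (n %/ (p * 1))%N = (m * p ^ k.-1)%N.
    by rewrite muln1 /n -(prednK k0) expnSr mulnA mulnK.
  ring.
have key : forall i, i \in divisors m -> i != 1%N ->
    prel p k (a (n %/ i)%N) (a (n %/ (p * i))%N).
  move=> i; rewrite -dvdn_divisors // => im i1.
  have i0 : (0 < i)%N by apply: dvdn_gt0 im.
  have qm : (m %/ i %| m)%N by apply/dvdnP; exists i; rewrite mulnC divnK.
  have e1 : (n %/ i = m %/ i * p ^ k)%N by rewrite /n -divn_mulAC.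
  have e2 : (n %/ (p * i) = m %/ i * p ^ k.-1)%N.
    by rewrite /n -{1}(prednK k0) expnS mulnCA divnMl // -divn_mulAC.
  rewrite e1 e2; apply: IH.
  - by apply: ltn_Pdiv => //; rewrite ltn_neqAle eq_sym i1 i0.
  - exact: pos_div.
  - exact: coprime_dvdl qm cmp.
apply: (prel_cancel pp k0 (B1 := Xp * Yp) (B2 := Ym * Xm)).
- apply: mulf_neq0; rewrite prodf_seq_neq0; apply/allP => i id; apply/implyP => _;
    apply: nz; [exact: dn2 | exact: dn1].
- by rewrite -eA' -eM'.
apply: prel_mul => //.
  apply: prel_prod => // [i _|i id /andP[_ i1]]; first by rewrite eqr_opp.
  exact: key.
apply: prel_prod => // [i _|i id /andP[_ i1]]; first by rewrite eqr_oppLR.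
by apply: prel_sym => //; apply: key.
Qed.
Lemma gauss_pk a p k m : strong_euler_gauss a -> prime p -> (0 < k)%N -> (0 < m)%N ->
  coprime m p ->
  ((p ^ k)%:Z %| \sum_(d <- divisors (m * p ^ k)) mobius d * a ((m * p ^ k) %/ d)%N)%Z.
Proof.
move=> H pp k0 m0 cmp.
have p0 := prime_gt0 pp.
set n := (m * p ^ k)%N.
have npm := ndvd_of_coprime pp cmp.
rewrite (bigID (fun d => mobius d != 0)) /=.
rewrite [X in _ + X]big1 ?addr0; last by move=> d /negPn/eqP ->; rewrite mul0r.
have pe := @divisors_perm p k m (fun z : int => z != 0) pp k0 m0 cmp isT.
rewrite /= in pe.
rewrite -big_filter (perm_big _ pe) big_cat big_map /= !big_filter.
rewrite [X in _ + X](eq_bigl (fun e => mobius e != 0)); last by move=> e; rewrite oppr_eq0.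
rewrite [X in _ + X]big_seq_cond [X in X + _]big_seq_cond -big_split /=.
apply: rpred_sum => i /andP[]; rewrite -dvdn_divisors // => im _.
have i0 : (0 < i)%N by apply: dvdn_gt0 im.
have npi : ~~ (p %| i)%N by apply: contra npm => pi; apply: dvdn_trans im.
rewrite mobius_pM // mulNr -mulrBr; apply: dvdz_mull.
have qm : (m %/ i %| m)%N by apply/dvdnP; exists i; rewrite mulnC divnK.
have e1 : (n %/ i = m %/ i * p ^ k)%N by rewrite /n -divn_mulAC.
have e2 : (n %/ (p * i) = m %/ i * p ^ k.-1)%N.
  by rewrite /n -{1}(prednK k0) expnS mulnCA divnMl // -divn_mulAC.
rewrite e1 e2; apply: prel_dvd => //; apply: main_step => //.
- exact: pos_div.
- exact: coprime_dvdl qm cmp.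
Qed.

Theorem theorem2 (a : nat -> int) : strong_euler_gauss a -> gauss_seq a.
Proof.
move=> H n n0; rewrite eqz_mod_dvd subr0 dvdzE /=.
apply/dvdn_partP => // p; rewrite inE => pn.
have pp : prime p by move: pn; rewrite mem_primes => /andP[].
set k := logn p n; rewrite p_part -/k.
have k0 : (0 < k)%N by rewrite logn_gt0.
have pkn : (p ^ k %| n)%N by rewrite pfactor_dvdn.
set m := (n %/ p ^ k)%N.
have en : n = (m * p ^ k)%N by rewrite divnK.
have m0 : (0 < m)%N by apply: pos_div.
have cmp : coprime m p.
  rewrite coprime_sym prime_coprime //; apply/negP => pm.
  have : (p ^ k.+1 %| n)%N by rewrite en expnSr mulnC dvdn_pmul2r ?expn_gt0 ?prime_gt0.
  by rewrite pfactor_dvdn // ltnn.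
have := gauss_pk H pp k0 m0 cmp; rewrite -en dvdzE /=.
done.
Qed.
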